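(* Let $\mathcal O$ be a regular family of $\sigma$-trees, let $\mathbf A$ be a $\sigma$-tree and $\phi:\mathbf A\to\mathbf D(\mathcal O)$ a homomorphism. Then for every $a\in V(\mathbf A)$, $(\mathbf A,a)\in\phi(a)$.
   Context: A type $\sigma$ is a finite set of relation symbols with arities; a $\sigma$-structure $\mathbf A$ is a finite set $V(\mathbf A)$ with an $r$-ary relation $R(\mathbf A)$ for each $R$ of arity $r$; homomorphisms are relation-preserving maps. $\mathrm{Inc}(\mathbf A)$ is the bipartite multigraph with parts $V(\mathbf A)$ and the blocks $(R,(x_1,\dots,x_r))$, $(x_1,\dots,x_r)\in R(\mathbf A)$, with one edge joining $x_i$ to the block for each $i$. $\mathbf A$ is a $\sigma$-forest if $\mathrm{Inc}(\mathbf A)$ has no cycles or parallel edges, a $\sigma$-tree if moreover connected. $\mathbb F,\mathbb T$: isomorphism classes of $\sigma$-forests/trees; $\mathbb F_{\mathrm r},\mathbb T_{\mathrm r}$: rooted ones $(\mathbf A,a)$. $(\mathbf A,a)+(\mathbf B,b)$: disjoint union with $a,b$ identified as new root; $[(\mathbf A,a)]$ forgets the root; $\mathbf T_0$ is the one-vertex rooted tree with empty relations. For $\mathcal O\subseteq\mathbb F$, $\mathcal O-(\mathbf A,a)=\{(\mathbf B,b)\in\mathbb F_{\mathrm r}:[(\mathbf A,a)+(\mathbf B,b)]\in\mathcal O\}$; $\mathcal O$ is regular if there are finitely many distinct such sets. Concatenation: $\mathbf C(R,(\mathbf A_1,x_1),\dots,(\mathbf A_r,x_r))$ is the disjoint union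 of the $\mathbf A_i$ with $(x_1,\dots,x_r)$ added to $R$. $\mathbf D(\mathcal O)$ has as vertices the sets $\mathcal V\subseteq\mathbb T_{\mathrm r}$ with (i) $\mathbf T_0\in\mathcal V$; (ii) $(\mathbf A,a)\in\mathcal V$ implies $\mathbf A\notin\mathcal O$; (iii) $\mathcal V=\mathbb T_{\mathrm r}\setminus\bigcup_{(\mathbf A,a)\in\mathcal H}(\mathcal O-(\mathbf A,a))$ for some family $\mathcal H$ of rooted trees. For $R$ of arity $r$, $(\mathcal V_1,\dots,\mathcal V_r)\in R(\mathbf D(\mathcal O))$ iff for all $(\mathbf A_i,a_i)\in\mathcal V_i$, with $\mathbf T=\mathbf C(R,(\mathbf A_1,a_1),\dots,(\mathbf A_r,a_r))$, $(\mathbf T,a_j)\in\mathcal V_j$ for all $j$. *)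

(* Defs.v *)
From HB Require Import structures.
From mathcomp Require Import all_boot.
Set Implicit Arguments. Unset Strict Implicit. Unset Printing Implicit Defensive.

Section Sigma.
Variables (sym : finType) (ar : sym -> nat).

Record str := Str { V :> finType; rels : forall R : sym, {set (ar R).-tuple V} }.

Record rstr := RStr { rs :> str; rt : V rs }.

Definition iso (A B : str) : Prop :=
  exists f : V A -> V B, bijective f /\
    forall (R : sym) (t : (ar R).-tuple (V A)),
      (t \in rels A R) = (map_tuple f t \in rels B R).

Definition iso_invariant (P : str -> Prop) : Prop :=
  forall A B, iso A B -> P A -> P B.

(* The incidence multigraph Inc(A): nodes are vertices (inl) and blocks (inr);
   a block (R, t) is a node of Inc(A) iff t \in R(A). *)
Definition block (A : str) := {R : sym & (ar R).-tuple (V A)}.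
Definition node (A : str) := (V A + block A)%type.

Definition is_node (A : str) (u : node A) : bool :=
  match u with inl _ => true | inr b => tagged b \in rels A (tag b) end.

(* adjacency in Inc(A) (the underlying simple graph; multiplicities are
   handled by [no_parallel]) *)
Definition inc_adj (A : str) : rel (node A) := fun u v =>
  match u, v with
  | inl x, inr b | inr b, inl x => (tagged b \in rels A (tag b)) && (x \in (tagged b : seq _))
  | _, _ => false
  end.

(* No parallel edges: x_i = x_j with i <> j in a tuple of a relation would give
   two edges between x_i and the block. *)
Definition no_parallel (A : str) : Prop :=
  forall (R : sym) (t : (ar R).-tuple (V A)), t \in rels A R -> uniq t.

Definition no_cycle (A : str) : Prop :=
  ~ exists p : seq (node A), [/\ 3 <= size p, uniq p & cycle (@inc_adj A) p].

Definition forest (A : str) : Prop := no_parallel A /\ no_cycle A.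

Definition connected_inc (A : str) : Prop :=
  forall u v : node A, is_node u -> is_node v -> connect (@inc_adj A) u v.

Definition tree (A : str) : Prop := forest A /\ connected_inc A.

(* (A,a) + (B,b): disjoint union of A and B with a and b identified
   (as the new root). *)
Definition plus_carrier (Aa Bb : rstr) : finType :=
  (V Aa + {y : V Bb | y != rt Bb})%type.

Definition plus_inl (Aa Bb : rstr) (x : V Aa) : plus_carrier Aa Bb := inl x.
Definition plus_inr (Aa Bb : rstr) (y : V Bb) : plus_carrier Aa Bb :=
  match insub y with Some y' => inr y' | None => inl (rt Aa) end.

Definition plus_str (Aa Bb : rstr) : str :=
  @Str (plus_carrier Aa Bb) (fun R =>
    [set map_tuple (@plus_inl Aa Bb) t | t in rels Aa R] :|:
    [set map_tuple (@plus_inr Aa Bb) t | t in rels Bb R]).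

Definition plus (Aa Bb : rstr) : rstr := @RStr (plus_str Aa Bb) (plus_inl Bb (rt Aa)).

Definition minus (O : str -> Prop) (Aa : rstr) : rstr -> Prop :=
  fun Bb => forest Bb /\ O (plus Aa Bb).

Definition regular (O : str -> Prop) : Prop :=
  exists (n : nat) (F : 'I_n -> rstr -> Prop),
    forall Aa : rstr, forest Aa ->
      exists i : 'I_n, forall Bb : rstr, minus O Aa Bb <-> F i Bb.

Definition T0_str : str := @Str unit (fun R => set0).
Definition T0 : rstr := @RStr T0_str tt.

Definition concat_carrier (R : sym) (Aa : 'I_(ar R) -> rstr) : finType :=
  {i : 'I_(ar R) & V (Aa i)}.

Definition concat_str (R : sym) (Aa : 'I_(ar R) -> rstr) : str :=
  @Str (concat_carrier Aa) (fun S =>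
    (\bigcup_(i : 'I_(ar R))
        [set map_tuple (fun x : V (Aa i) => Tagged (fun j => V (Aa j)) x) t
        | t in rels (Aa i) S]) :|:
    [set t : (ar S).-tuple (concat_carrier Aa) |
       (S == R) &&
       (val t == [seq Tagged (fun j => V (Aa j)) (rt (Aa i)) | i <- enum 'I_(ar R)])]).

Definition concat_rooted (R : sym) (Aa : 'I_(ar R) -> rstr) (j : 'I_(ar R)) : rstr :=
  @RStr (concat_str Aa) (Tagged (fun i => V (Aa i)) (rt (Aa j))).

Definition is_DVert (O : str -> Prop) (Vs : rstr -> Prop) : Prop :=
  [/\ Vs T0,
      forall Aa, Vs Aa -> ~ O Aa &
      exists H : rstr -> Prop, (forall h, H h -> tree h) /\
        forall T : rstr, Vs T <-> (tree T /\ forall h, H h -> ~ minus O h T)].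

Definition DVert (O : str -> Prop) := {Vs : rstr -> Prop | is_DVert O Vs}.

(* An (ar R)-tuple (V_1, ..., V_r) of vertices of D(O), given as a function
   on indices (tuples of DVert would hit a universe constraint). *)
Definition DRel (O : str -> Prop) (R : sym) (vs : 'I_(ar R) -> DVert O) : Prop :=
  forall Aa : 'I_(ar R) -> rstr,
    (forall i, proj1_sig (vs i) (Aa i)) ->
    forall j, proj1_sig (vs j) (concat_rooted Aa j).

Definition is_hom_D (O : str -> Prop) (A : str) (phi : V A -> DVert O) : Prop :=
  forall (R : sym) (t : (ar R).-tuple (V A)), t \in rels A R -> DRel (fun i => phi (tnth t i)).

End Sigma.

(* Main.v *)
Require Import Defs.
From mathcomp Require Import all_boot.
From Stdlib Require Import Eqdep_dec Classical.
Set Implicit Arguments. Unset Strict Implicit. Unset Printing Implicit Defensive.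

Section Gen.
Variables (sym : finType) (ar : sym -> nat).

Definition riso (B A : str ar) (b : V B) (a : V A) (f : V B -> V A) :=
  [/\ bijective f, f b = a &
      forall S (u : (ar S).-tuple (V B)), (u \in rels B S) = (map_tuple f u \in rels A S)].

Lemma map_tupleK (T U : Type) n (f : T -> U) (g : U -> T) :
  cancel f g -> cancel (@map_tuple n _ _ f) (map_tuple g).
Proof.
move=> fK u; apply: val_inj => /=; rewrite -map_comp.
by by rewrite (eq_map fK) map_id.
Qed.

Lemma riso_sym (B A : str ar) (b : V B) (a : V A) (f : V B -> V A) : @riso B A b a f -> exists g, @riso A B a b g.
Proof.
case=> [[g fK gK] fb Hr]; exists g; split.
- by exists f.
- by rewrite -fb fK.
- by move=> S u; rewrite Hr (map_tupleK (n:=_) gK).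
Qed.

Lemma riso_imset (B A : str ar) (b : V B) (a : V A) (f : V B -> V A) : @riso B A b a f ->
  forall S, rels A S = map_tuple f @: rels B S.
Proof.
case=> [[g fK gK] fb Hr] S; apply/setP => u.
have inj : injective (@map_tuple (ar S) _ _ f) by apply: can_inj (map_tupleK (n:=_) fK).
rewrite -{1}(map_tupleK (n:=_) gK u) -Hr.
by rewrite -(mem_imset _ _ inj) (map_tupleK (n:=_) gK).
Qed.

Definition plusF (h : rstr ar) (B A : str ar) (b : V B) (a : V A) (f : V B -> V A)
  (p : plus_carrier h (RStr b)) : plus_carrier h (RStr a) :=
  match p with inl x => inl x | inr y => plus_inr h (Bb:=RStr a) (f (val y)) end.
Arguments plusF {h B A b a} f p.

Lemma plus_inr_root (h : rstr ar) (B : rstr ar) : plus_inr h (rt B) = inl (rt h).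
Proof. by rewrite /plus_inr insubF //= eqxx. Qed.

Lemma plus_inr_nroot (h : rstr ar) (B : rstr ar) y (Hy : y != rt B) :
  plus_inr h y = inr (Sub y Hy).
Proof. by rewrite /plus_inr (insubT (fun z => z != rt B) Hy). Qed.

Lemma plusF_inr (h : rstr ar) (B A : str ar) (b : V B) (a : V A) (f : V B -> V A) : @riso B A b a f -> forall y : V B,
  plusF (h:=h) (b:=b) (a:=a) f (plus_inr h (Bb:=RStr b) y) = plus_inr h (Bb:=RStr a) (f y).
Proof.
case=> [[g fK gK] fb _] y.
case: (eqVneq y b) => [->|Hy].
  by rewrite (plus_inr_root h (RStr b)) /= fb (plus_inr_root h (RStr a)).
by rewrite (plus_inr_nroot h (B := RStr b) Hy).
Qed.

Lemma plusF_inj (h : rstr ar) (B A : str ar) (b : V B) (a : V A) (f : V B -> V A) : @riso B A b a f -> injective (plusF (h:=h) (b:=b) (a:=a) f).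
Proof.
move=> Hf; have [[g fK gK] fb _] := Hf.
have finj : injective f by apply: can_inj fK.
move=> [x|y] [x'|y'] /=.
- by case=> ->.
- have Hy' : f (val y') != a by rewrite -fb (inj_eq finj) (valP y').
  by rewrite (plus_inr_nroot h (B := RStr a) Hy').
- have Hy : f (val y) != a by rewrite -fb (inj_eq finj) (valP y).
  by rewrite (plus_inr_nroot h (B := RStr a) Hy).
- have Hy' : f (val y') != a by rewrite -fb (inj_eq finj) (valP y').
  have Hy : f (val y) != a by rewrite -fb (inj_eq finj) (valP y).
  rewrite (plus_inr_nroot h (B := RStr a) Hy') (plus_inr_nroot h (B := RStr a) Hy).
  by case=> /finj E; congr inr; apply: val_inj.
Qed.

Lemma plus_iso (h : rstr ar) (B A : str ar) (b : V B) (a : V A) (f : V B -> V A) : @riso B A b a f ->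
  iso (plus h (RStr b)) (plus h (RStr a)).
Proof.
move=> Hf; have Hf' := Hf; case: Hf' => [[g fK gK] fb Hr].
have Hg : riso a b g.
  split; [by exists f | by rewrite -fb fK | by move=> S u; rewrite Hr (map_tupleK (n:=_) gK)].
have Finj := @plusF_inj h _ _ _ _ _ Hf.
exists (plusF (h:=h) (b:=b) (a:=a) f); split.
- exists (plusF (h:=h) (b:=a) (a:=b) g).
  + case=> [x|y] //=.
    rewrite (@plusF_inr h _ _ _ _ _ Hg) fK.
    by rewrite (plus_inr_nroot h (B := RStr b) (valP y)) /=; congr inr; apply: val_inj.
  + case=> [x|y] //=.
    rewrite (@plusF_inr h _ _ _ _ _ Hf) gK.
    by rewrite (plus_inr_nroot h (B := RStr a) (valP y)) /=; congr inr; apply: val_inj.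
- move=> S u.
  have minj : injective (@map_tuple (ar S) _ _ (plusF (h:=h) (b:=b) (a:=a) f)).
    move=> u1 u2 E; apply: val_inj; apply: (inj_map Finj); exact: (congr1 val E).
  suff -> : rels (plus h (RStr a)) S = map_tuple (plusF (h:=h) (b:=b) (a:=a) f) @: rels (plus h (RStr b)) S
    by rewrite (mem_imset _ _ minj).
  rewrite /= imsetU -!imset_comp (riso_imset Hf) -imset_comp.
  congr (_ :|: _); apply: eq_imset => w; apply: val_inj => /=; rewrite -!map_comp;
    apply: eq_map => y //=.
  by rewrite (@plusF_inr h _ _ _ _ _ Hf).
Qed.
End Gen.
Set Implicit Arguments. Unset Strict Implicit. Unset Printing Implicit Defensive.

Section Graph.
Variables (sym : finType) (ar : sym -> nat).

Lemma inc_adj_sym (A : str ar) : symmetric (@inc_adj _ _ A).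
Proof. by move=> [x|b] [y|c]. Qed.

Lemma map_path_gen (T U : Type) (e : rel T) (e' : rel U) (f : T -> U) :
  (forall x y, e x y -> e' (f x) (f y)) ->
  forall x p, path e x p -> path e' (f x) (map f p).
Proof.
move=> He x p; elim: p x => [|y p IH] x //= /andP [exy pp].
by rewrite He //= IH.
Qed.

Lemma map_cycle_gen (T U : Type) (e : rel T) (e' : rel U) (f : T -> U) :
  (forall x y, e x y -> e' (f x) (f y)) ->
  forall p, cycle e p -> cycle e' (map f p).
Proof.
move=> He [|x p] //=; move/(map_path_gen He); by rewrite map_rcons.
Qed.

Definition nb (X : str ar) := \sum_(S : sym) #|rels X S|.

Lemma DRel_ext (O : str ar -> Prop) (R : sym) (vs ws : 'I_(ar R) -> DVert O) :
  (forall k, vs k = ws k) -> DRel vs -> DRel ws.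
Proof. by move=> E H Aa HA j; rewrite -E; apply: H => i; rewrite E. Qed.

Section Decomp.
Variables (A : str ar) (HA : tree A) (R : sym) (t : (ar R).-tuple (V A))
  (Ht : t \in rels A R) (j0 : 'I_(ar R)).

Definition isbk S (s : seq (V A)) := (S == R) && (s == val t).
Definition isbn (n : node A) : bool :=
  if n is inr b then isbk (tag b) (val (tagged b)) else false.
Definition adj' : rel (node A) := fun u v => [&& inc_adj u v, ~~ isbn u & ~~ isbn v].
Definition bn : node A := inr (Tagged (fun S => (ar S).-tuple (V A)) t).

Lemma isbn_bn : isbn bn.
Proof. by rewrite /= /isbk !eqxx. Qed.

Lemma adj'_sym : symmetric adj'.
Proof. move=> u v. by rewrite /adj' inc_adj_sym; case: (isbn u) (isbn v) => [] []; rewrite /= ?andbF ?andbT. Qed.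

Lemma adj_bn y v : inc_adj (inl y) v -> isbn v -> y \in t.
Proof.
case: v => [//|[S u]] /= /andP [_ yu] /andP [_ /eqP eu].
by have : y \in tval u := yu; rewrite eu.
Qed.

Lemma to_bn p u : ~~ isbn u -> path (@inc_adj _ _ A) u p -> isbn (last u p) ->
  exists i, connect adj' u (inl (tnth t i)).
Proof.
elim: p u => [|v p IH] u /=; first by move=> /negbTE ->.
move=> nu /andP [euv pp] lv.
case: (boolP (isbn v)) => bv.
  case: u nu euv => [y|b] nu euv; last by clear pp lv; case: v bv euv.
  have /tnthP [i ->] := adj_bn euv bv.
  by exists i; apply: connect0.
have [i Hi] := IH v bv pp lv.
exists i; apply: connect_trans Hi; apply: connect1.
by rewrite /adj' euv nu bv.
Qed.

Lemma side_ex x : exists i, connect adj' (inl x) (inl (tnth t i)).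
Proof.
have := HA.2 (inl x) bn isT Ht.
case/connectP => p pp lp.
apply: (to_bn (p := p)) => //.
by rewrite -lp isbn_bn.
Qed.

Definition side (x : V A) : 'I_(ar R) :=
  odflt j0 [pick i | connect adj' (inl x) (inl (tnth t i))].

Lemma side_spec x : connect adj' (inl x) (inl (tnth t (side x))).
Proof.
rewrite /side; case: pickP => [i //|H].
by have [i Hi] := side_ex x; rewrite H in Hi.
Qed.

Lemma t_uniq : uniq t.
Proof. exact: HA.1.1 R t Ht. Qed.

Lemma path_nbn u p : path adj' u p -> all (fun v => ~~ isbn v) p.
Proof.
elim: p u => [|v p IH] u //= /andP [/and3P [_ _ nv] pp].
by rewrite nv (IH v).
Qed.

Lemma conn_ti i i' : connect adj' (inl (tnth t i)) (inl (tnth t i')) -> i = i'.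
Proof.
move=> /connectP [p pp E].
apply/eqP; apply/negPn/negP => nii.
move: E; case: (shortenP pp) => p' pp' up' _ E.
have tne : tnth t i != tnth t i'.
  by apply: contra nii => /eqP /(tuple_uniqP _ t_uniq) ->.
apply: (HA.1.2); exists (bn :: inl (tnth t i) :: p'); split.
- case: p' E {pp' up'} => [[]|v p'] /=; last by [].
  by move=> E; rewrite E eqxx in tne.
- rewrite cons_uniq up' andbT.
  apply/negP => /= bin.
  have := path_nbn (sub_path (fun u v (h : adj' u v) => h) pp').
  move=> al; rewrite inE in bin; case/orP: bin => [//|bin].
  by have := allP al _ bin; rewrite isbn_bn.
- rewrite /cycle rcons_cons /= rcons_path.
  rewrite Ht mem_tnth /=.
  have -> : path (@inc_adj _ _ A) (inl (tnth t i)) p'.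
    by apply: sub_path pp' => u v /and3P [].
  by rewrite -E /= Ht mem_tnth.
Qed.

Lemma side_eq x i : connect adj' (inl x) (inl (tnth t i)) -> side x = i.
Proof.
move=> H; apply: conn_ti; apply: connect_trans H.
by rewrite (sym_connect_sym adj'_sym); apply: side_spec.
Qed.

Lemma side_conn x y : connect adj' (inl x) (inl y) -> side x = side y.
Proof. by move=> H; apply: side_eq; apply: connect_trans H (side_spec y). Qed.

Lemma side_t i : side (tnth t i) = i.
Proof. by apply: side_eq; apply: connect0. Qed.

Lemma side_block S (u : (ar S).-tuple (V A)) x y :
  u \in rels A S -> ~~ isbk S u -> x \in u -> y \in u -> side x = side y.
Proof.
move=> Hu nb xu yu; apply: side_conn.
apply: (@connect_trans _ _ (inr (Tagged (fun S => (ar S).-tuple (V A)) u))).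
  by apply: connect1; rewrite /adj' /= Hu xu (negbTE nb).
by apply: connect1; rewrite /adj' /= Hu yu (negbTE nb).
Qed.


Definition Pc (i : 'I_(ar R)) : finType := {x : V A | side x == i}.
Definition Prels i S : {set (ar S).-tuple (Pc i)} :=
  [set u : (ar S).-tuple (Pc i) | (map_tuple val u \in rels A S) && ~~ isbk S (map val u)].
Lemma inPrels i S (w : (ar S).-tuple (Pc i)) :
  (w \in Prels i S) = (map_tuple val w \in rels A S) && ~~ isbk S (map_tuple val w).
Proof. by rewrite inE. Qed.
Definition Pstr i : str ar := @Str _ ar (Pc i) (Prels i).
Lemma side_t' i : side (tnth t i) == i. Proof. by rewrite side_t. Qed.
Definition Proot i : Pc i := Sub (tnth t i) (side_t' i).
Definition Pr i : rstr ar := @RStr _ ar (Pstr i) (Proot i).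

Lemma val_map_inj n i : injective (fun u : n.-tuple (Pc i) => map_tuple val u).
Proof. move=> u1 u2 E; apply: val_inj; apply: (inj_map val_inj); exact: (congr1 val E). Qed.

Definition Nm i (n : node (Pstr i)) : node A :=
  match n with
  | inl x => inl (val x)
  | inr b => inr (Tagged (fun S => (ar S).-tuple (V A)) (map_tuple val (tagged b)))
  end.

Lemma Nm_inj i : injective (@Nm i).
Proof.
move=> [x|[S1 u1]] [y|[S2 u2]] //=.
- by case=> /val_inj ->.
- move=> E0; have E := Some_inj (congr1 (fun n : node A => if n is inr b then Some b else None) E0).
  simpl in E; have ES := congr1 tag E; simpl in ES; subst S2.
  have := Eqdep_dec.inj_pair2_eq_dec _ (@eq_comparable sym) _ _ _ _ E.
  move=> /val_map_inj ->.
  by [].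
Qed.

Lemma Nm_adj i u v : inc_adj u v -> inc_adj (@Nm i u) (Nm v).
Proof.
case: u v => [x|[S u]] [y|[S' u']] //=.
- rewrite inE => /andP [/andP [H1 H2] H3]; rewrite H1 /=.
  by rewrite (mem_map val_inj).
- rewrite inE => /andP [/andP [H1 H2] H3]; rewrite H1 /=.
  by rewrite (mem_map val_inj).
Qed.

Lemma P_forest i : forest (Pstr i).
Proof.
split.
- move=> S u; rewrite inE => /andP [H _].
  by rewrite -(map_inj_uniq val_inj); apply: (HA.1.1 S (map_tuple val u) H).
- move=> [p [sp up cp]]; apply: HA.1.2; exists (map (@Nm i) p); split.
  + by rewrite size_map.
  + by rewrite (map_inj_uniq (@Nm_inj i)).
  + exact: (map_cycle_gen (@Nm_adj i)).
Qed.

Lemma lift_step i (m : node (Pstr i)) v : adj' (Nm m) v ->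
  exists2 m1, Nm m1 = v & inc_adj m m1.
Proof.
case: m => [x|[S w]]; case: v => [y|[S' u]] //=.
- rewrite /adj' /= => /andP [/andP [Hu xu] nb].
  have sx : forall z, z \in u -> side z == i.
    by move=> z zu; rewrite (side_block Hu nb zu xu) (valP x).
  exists (inr (Tagged (fun S => (ar S).-tuple (Pc i)) (map_tuple (insubd x) u))).
    congr inr; congr Tagged; apply: val_inj => /=; rewrite -map_comp.
    by apply: map_id_in => z zu /=; rewrite insubdK //; apply: sx.
  rewrite /= inPrels.
  have -> : map_tuple val (map_tuple (insubd x) u) = u.
    apply: val_inj => /=; rewrite -map_comp.
    by apply: map_id_in => z zu /=; rewrite insubdK //; apply: sx.
  rewrite Hu nb /=.
  have ex : insubd x (val x) = x by apply: val_inj; rewrite insubdK //; apply: (valP x).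
  rewrite -[X in X \in _]ex; exact: (map_f (insubd x) xu).
- rewrite /adj' /= => /andP [/andP [Hw yw] /andP [nb _]].
  case/mapP: yw => z zw ->.
  exists (inl z) => //=.
  by rewrite inE Hw nb zw.
Qed.

Lemma lift_path i p (m : node (Pstr i)) : path adj' (Nm m) p ->
  forall m', last (Nm m) p = Nm m' -> connect (@inc_adj _ _ (Pstr i)) m m'.
Proof.
elim: p m => [|v p IH] m /=.
  by move=> _ m' /(@Nm_inj i) ->; apply: connect0.
move=> /andP [av pp] m' lv.
have [m1 Em1 a1] := lift_step av.
apply: (@connect_trans _ _ m1); first exact: connect1.
by apply: IH; rewrite Em1.
Qed.

Lemma to_root i (m : node (Pstr i)) : is_node m -> connect (@inc_adj _ _ (Pstr i)) m (inl (Proot i)).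
Proof.
have Hx : forall x : Pc i, connect (@inc_adj _ _ (Pstr i)) (inl x) (inl (Proot i)).
  move=> x; have := side_spec (val x); rewrite (eqP (valP x)).
  by case/connectP => p pp lp; apply: (lift_path (m := inl x) pp).
case: m => [x _|[S w]]; first exact: Hx.
rewrite /= inE => /andP [Hw nb].
case Ew: (tval w) => [|z w'].
  exfalso.
  have := HA.2 (inr (Tagged (fun S => (ar S).-tuple (V A)) (map_tuple val w))) (inl (tnth t i)) Hw isT.
  case/connectP => [[|v p]] /=; first by [].
  case: v => [y|//] /andP [/andP [_]].
  by rewrite Ew.
apply: (@connect_trans _ _ (inl z)); last exact: Hx.
by apply: connect1; rewrite /= inE Hw nb Ew mem_head.
Qed.

Lemma P_tree i : tree (Pstr i).
Proof.
split; first exact: P_forest.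
move=> u v nu nv.
apply: connect_trans (to_root nu) _.
by rewrite (sym_connect_sym (@inc_adj_sym (Pstr i))); apply: to_root.
Qed.

Lemma P_nb i : nb (Pstr i) < nb A.
Proof.
rewrite /nb (bigD1 R) //= [X in _ < X](bigD1 R) //=.
rewrite -addSn; apply: leq_add.
- rewrite -(card_imset _ (@val_map_inj (ar R) i)).
  have sub : map_tuple val @: Prels i R \subset rels A R :\ t.
    apply/subsetP => _ /imsetP [w Hw ->]; rewrite inPrels in Hw.
    case/andP: Hw => H1 H2; rewrite !inE H1 andbT.
    by apply: contra H2 => /eqP ->; rewrite /isbk !eqxx.
  apply: leq_ltn_trans (subset_leq_card sub) _.
  by rewrite [X in _ < X](cardsD1 t) Ht.
- apply: leq_sum => S _.
  rewrite -(card_imset _ (@val_map_inj (ar S) i)); apply: subset_leq_card.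
  by apply/subsetP => _ /imsetP [w Hw ->]; rewrite inPrels in Hw; case/andP: Hw.
Qed.

Lemma P_hom (O : str ar -> Prop) (phi : V A -> DVert O) : is_hom_D phi ->
  forall i, is_hom_D (fun x : V (Pstr i) => phi (val x)).
Proof.
move=> hom i S u Hu; rewrite inPrels in Hu; case/andP: Hu => H1 _.
by apply: (DRel_ext _ (hom S _ H1)) => k; rewrite tnth_map.
Qed.

Definition cf (p : concat_carrier Pr) : V A := val (tagged p : Pc (tag p)).
Definition cg (x : V A) : concat_carrier Pr :=
  Tagged (fun i => V (Pr i)) (Sub x (eqxx (side x)) : Pc (side x)).

Lemma cfK : cancel cf cg.
Proof.
case=> i [x Hx]; rewrite /cg /cf /=.
have E := eqP Hx; subst i.
by congr Tagged; apply: val_inj.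
Qed.

Lemma cgK : cancel cg cf. Proof. by []. Qed.

Lemma cf_side p : side (cf p) = tag p.
Proof. by case: p => i [x Hx]; apply/eqP. Qed.

Lemma c_rels S u : (u \in rels (concat_str Pr) S) = (map_tuple cf u \in rels A S).
Proof.
have finj : injective cf := can_inj cfK.
rewrite /= in_setU.
apply/idP/idP.
- case/orP.
  + case/bigcupP => i _ /imsetP [w Hw ->]; rewrite inPrels in Hw; case/andP: Hw => H1 _.
    suff -> : map_tuple cf (map_tuple (Tagged (fun j => V (Pr j))) w) = map_tuple val w by [].
    by apply: val_inj => /=; rewrite -map_comp.
  + rewrite inE => /andP [/eqP ES eu]; subst S.
    suff -> : map_tuple cf u = t by [].
    apply: val_inj => /=; rewrite (eqP eu) -map_comp.
    by rewrite -[in RHS](map_tnth_enum t).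
- move=> H; case: (boolP (isbk S (map_tuple cf u))) => bk.
  + apply/orP; right; rewrite inE.
    case/andP: bk => /eqP ES /eqP eu; subst S; rewrite eqxx /=; apply/eqP.
    have Et : map_tuple cf u = t by apply: val_inj.
    rewrite -[in LHS](map_tnth_enum u); apply: eq_map => k; apply: finj.
    by transitivity (tnth t k); [rewrite -Et tnth_map | ].
  + apply/orP; left; apply/bigcupP.
    pose i := if [pick q in u] is Some q then tag q else j0; exists i => //.
    have ui : forall p, p \in u -> tag p = i.
      move=> p pu; rewrite /i.
      have [q qu Eh] : exists2 q, q \in u & i = tag q.
        by rewrite /i; case: pickP => [q qu | H0]; [exists q | rewrite H0 in pu].
      rewrite /i in Eh; rewrite Eh -!cf_side.
      by apply: (side_block H bk); apply: map_f.
    have ciP : forall p, p \in u -> side (cf p) == i by move=> p pu; rewrite cf_side ui.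
    apply/imsetP; exists (map_tuple (fun p => insubd (Proot i) (cf p)) u).
    * rewrite inPrels.
      have -> : map_tuple val (map_tuple (fun p => insubd (Proot i) (cf p)) u) = map_tuple cf u.
        apply: val_inj => /=; rewrite -map_comp; apply/eq_in_map => p pu /=.
        by rewrite insubdK //; apply: ciP.
      by rewrite H bk.
    * apply: val_inj; apply: (inj_map finj) => /=; rewrite -!map_comp.
      apply/eq_in_map => p pu /=.
      by rewrite /cf /= insubdK //; apply: ciP.
Qed.

Lemma c_riso : riso (B := concat_str Pr) (rt (concat_rooted Pr j0)) (tnth t j0) cf.
Proof.
split; [by exists cg; [exact: cfK | exact: cgK] | by [] | exact: c_rels].
Qed.

End Decomp.
End Graph.
Set Implicit Arguments. Unset Strict Implicit. Unset Printing Implicit Defensive.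

Section Final.
Variables (sym : finType) (ar : sym -> nat) (O : str ar -> Prop) (O_iso : iso_invariant O).

Lemma transport (Vs : DVert O) (B A : str ar) (b : V B) (a : V A) (f : V B -> V A) :
  riso b a f -> tree A -> proj1_sig Vs (RStr b) -> proj1_sig Vs (RStr a).
Proof.
case: Vs => P [P0 PO [H [_ HH]]] /= Hf TA Pb.
have [TB nm] := (HH _).1 Pb.
apply/(HH _).2; split => // h Hh [fA Oa].
apply: (nm h Hh); split; first exact: TB.1.
have [g Hg] := riso_sym Hf.
exact: O_iso (plus_iso h Hg) Oa.
Qed.

Lemma noblock (A : str ar) (HA : tree A) (a : V A) :
  ~ (exists S (u : (ar S).-tuple (V A)), u \in rels A S /\ a \in u) ->
  riso (B := T0_str ar) tt a (fun _ => a).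
Proof.
move=> nob.
have allA : forall n : node A, is_node n -> n = inl a.
  move=> n nn; have := HA.2 (inl a) n isT nn.
  case/connectP => [[|v p]] /=; first by [].
  move=> /andP [av _] _; exfalso; apply: nob.
  by case: v av => [//|[S u]] /= /andP [Hu au]; exists S, u.
split.
- exists (fun _ => tt); first by case.
  by move=> x; have := allA (inl x) isT; case.
- by [].
- move=> S u; rewrite /= in_set0; symmetry; apply/negbTE/negP => H.
  by have := allA (inr (Tagged (fun S => (ar S).-tuple (V A)) (map_tuple (fun _ => a) u))) H.
Qed.

Lemma step (A : str ar) :
  (forall B : str ar, nb B < nb A -> tree B -> forall phi : V B -> DVert O,
     is_hom_D phi -> forall b, proj1_sig (phi b) (RStr b)) ->
  tree A -> forall phi : V A -> DVert O, is_hom_D phi -> forall a, proj1_sig (phi a) (RStr a).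
Proof.
move=> IH HA phi hom a.
case: (classic (exists S (u : (ar S).-tuple (V A)), u \in rels A S /\ a \in u)) =>
  [[R [t [Ht ain]]] | nob].
- case/tnthP: ain => j0 ->.
  have Hp : forall i, proj1_sig (phi (tnth t i)) (Pr HA Ht j0 i).
    move=> i; exact: (IH _ (P_nb Ht j0 i) (P_tree HA Ht j0 i) _ (P_hom hom (i:=i)) (Proot HA Ht j0 i)).
  have Hc := hom R t Ht (Pr HA Ht j0) Hp j0.
  exact: transport (c_riso HA Ht j0) HA Hc.
- case: (proj2_sig (phi a)) => P0 _ _.
  exact: transport (noblock HA nob) HA P0.
Qed.

Lemma main_ind (n : nat) (A : str ar) : nb A <= n -> tree A ->
  forall phi : V A -> DVert O, is_hom_D phi -> forall a, proj1_sig (phi a) (RStr a).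
Proof.
elim: n A => [|n IHn] A le; apply: step => B lt.
  by have := leq_trans lt le.
by apply: IHn; rewrite -ltnS; apply: leq_trans lt le.
Qed.
End Final.

Theorem lemma4p2 (sym : finType) (ar : sym -> nat) (O : str ar -> Prop)
  (O_iso : iso_invariant O) (O_trees : forall A, O A -> tree A)
  (O_reg : regular O)
  (A : str ar) (A_tree : tree A) (phi : V A -> DVert O) (phi_hom : is_hom_D phi)
  (a : V A) : proj1_sig (phi a) (@RStr _ ar A a).
Proof. exact: (main_ind O_iso (leqnn (nb A)) A_tree phi_hom a). Qed.
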